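(* Let $k\ge r\ge 3$ and $t\ge0$ be integers and let $\pi\in\mathbb{C}(k,r)$ be a partition whose largest odd part is $2t+1$. Then: (1) if there is a part $2t+2$ with mark $2$ in $GG(\pi)$, then this part is of starting type $s_0$ or $s_2$; (2) if there is a part $2t+4$ with mark $2$ in $GG(\pi)$, then this part is of starting type $s_3$.
   Context: A partition $\pi=(\pi_1,\dots,\pi_\ell)$ is a finite non-increasing sequence of positive integers; ''$a$ occurs in $\pi$'' means $a=\pi_i$ for some $i$. Göllnitz–Gordon marking: $GG(\pi)$ assigns a positive integer (mark) to each part, processing the parts from smallest to largest; $\pi_i$ receives the smallest positive integer different from the marks of all parts $\pi_g$ with $g>i$ and $\pi_i-\pi_g\le 2$, where $\pi_i-\pi_g<2$ is required when $\pi_i$ is odd. An ''$r$-marked part $a$'' is a part equal to $a$ with mark $r$. $N_i(\pi)$ is the number of parts with mark $i$; $\pi^{(i)}_1\ge\dots\ge\pi^{(i)}_{N_i(\pi)}$ are the parts with mark $i$, with $\pi^{(i)}_0=+\infty$. $\mathbb{C}(k,r)$: partitions with (i) no odd part repeated; (ii) $\pi_i\ge\pi_{i+k-1}+2$ for $1\le i\le\ell-k+1$, strict if $\pi_i$ even; (iii) at most $r-1$ parts $\le 2$. Starting types: for $\pi\in\mathbb{C}(k,r)$ with $N_2=N_2(\pi)\ge1$, let $l$ be the largest integer in $\{0,\dots,N_2\}$ such that no odd part of $\pi$ is $\ge\pi^{(2)}_l$; for $l<i\le N_2$, $\pi^{(2)}_i$ has type $s_{-1}$. For $b=1,\dots,l$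 in increasing order, type and auxiliary $\sigma_b$: for $b=1$: Case 1: 1-marked part $\pi^{(2)}_1-1$ exists and $\pi^{(2)}_1+2$ does not occur: type $s_0$, $\sigma_1=\pi^{(2)}_1-1$; Case 2: 1-marked $\pi^{(2)}_1-2$ exists and $\pi^{(2)}_1+2$ does not occur: type $s_1$, $\sigma_1=\pi^{(2)}_1-2$; Case 3: 1-marked $\pi^{(2)}_1+2$ exists: type $s_2$, $\sigma_1=\pi^{(2)}_1+2$; Case 4: 1-marked $\pi^{(2)}_1$ exists: type $s_3$, $\sigma_1=\pi^{(2)}_1$. For $2\le b\le l$: Case 1: 1-marked $\pi^{(2)}_b-1$ exists and, if a 1-marked $\pi^{(2)}_b+2$ exists, $\sigma_{b-1}=\pi^{(2)}_b+2$: type $s_0$, $\sigma_b=\pi^{(2)}_b-1$; Case 2: same with $\pi^{(2)}_b-2$: type $s_1$, $\sigma_b=\pi^{(2)}_b-2$; Case 3: 1-marked $\pi^{(2)}_b+2$ exists and $\sigma_{b-1}\ne\pi^{(2)}_b+2$: type $s_2$, $\sigma_b=\pi^{(2)}_b+2$; Case 4: 1-marked $\pi^{(2)}_b$ exists: type $s_3$, $\sigma_b=\pi^{(2)}_b$. *)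

(* Defs.v *)
From mathcomp Require Import all_boot.
Set Implicit Arguments. Unset Strict Implicit. Unset Printing Implicit Defensive.

(* Partitions are represented as non-increasing sequences of positive naturals;
   index i (1-based in the paper) is position i-1 in the sequence. *)
Definition is_partition (p : seq nat) : bool := sorted geq p && all (fun x => 0 < x) p.

Definition mex1 (L : seq nat) : nat :=
  head 0 [seq n <- iota 1 (size L).+1 | n \notin L].

(* the Goellnitz-Gordon "nearness" condition: pi_i - pi_g <= 2,
   strict (< 2) when pi_i is odd (here pi_g <= pi_i). *)
Definition GG_near (x y : nat) : bool := if odd x then x - y < 2 else x - y <= 2.

(* GG marks, listed in the same order as the parts; the parts are processed
   from the smallest (end of the list) to the largest. *)
Fixpoint GG_marks (s : seq nat) : seq nat :=
  match s with
  | [::] => [::]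
  | x :: s' => let ms := GG_marks s' in
      mex1 [seq q.2 | q <- zip s' ms & GG_near x q.1] :: ms
  end.

Definition marked (p : seq nat) : seq (nat * nat) := zip p (GG_marks p).

Definition Nmark (i : nat) (p : seq nat) : nat := count (fun q => q.2 == i) (marked p).

Definition parts_marked (i : nat) (p : seq nat) : seq nat :=
  [seq q.1 | q <- marked p & q.2 == i].

(* pi^(i)_j for 1 <= j <= N_i (the value for j = 0, i.e. +infinity, is
   treated separately where it is used) *)
Definition pim (i : nat) (p : seq nat) (j : nat) : nat := nth 0 (parts_marked i p) j.-1.

Definition has_marked (p : seq nat) (r a : nat) : bool := (a, r) \in marked p.

Definition inC (k r : nat) (p : seq nat) : bool :=
  [&& is_partition p,
      all (fun a => ~~ odd a || (count_mem a p <= 1)) p,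
      all (fun i => if odd (nth 0 p i)
                    then nth 0 p (i + k - 1) + 2 <= nth 0 p i
                    else nth 0 p (i + k - 1) + 2 < nth 0 p i)
          (iota 0 (size p + 1 - k))
    & count (fun x => x <= 2) p <= r - 1].

(* condition defining l: no odd part of pi is >= pi^(2)_j (j = 0 : +infinity) *)
Definition no_odd_ge (p : seq nat) (j : nat) : bool :=
  (j == 0) || all (fun x => ~~ odd x || (x < pim 2 p j)) p.

Definition lval (p : seq nat) : nat :=
  \max_(j < (Nmark 2 p).+1 | no_odd_ge p j) (j : nat).

Inductive stype := s_m1 | s_0 | s_1 | s_2 | s_3.

(* type and sigma_b of pi^(2)_b for 1 <= b <= l (None if no case applies) *)
Fixpoint st_aux (p : seq nat) (b : nat) : option (stype * nat) :=
  match b with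
  | 0 => None
  | b'.+1 =>
    let a := pim 2 p b in
    let h1 := has_marked p 1 in
    match b' with
    | 0 =>
      if h1 (a - 1) && (a + 2 \notin p) then Some (s_0, a - 1)
      else if h1 (a - 2) && (a + 2 \notin p) then Some (s_1, a - 2)
      else if h1 (a + 2) then Some (s_2, a + 2)
      else if h1 a then Some (s_3, a)
      else None
    | _ =>
      match st_aux p b' with
      | None => None
      | Some (_, sg) =>
        let c := h1 (a + 2) ==> (sg == a + 2) in
        if h1 (a - 1) && c then Some (s_0, a - 1)
        else if h1 (a - 2) && c then Some (s_1, a - 2)
        else if h1 (a + 2) && (sg != a + 2) then Some (s_2, a + 2)
        else if h1 a then Some (s_3, a)
        else None
      end
    end
  end.

Definition start_type (p : seq nat) (j : nat) : option stype :=
  if lval p < j then Some s_m1 else omap fst (st_aux p j).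

(* Main.v *)
Require Import Defs.
From mathcomp Require Import all_boot.
From mathcomp Require Import zify.
Set Implicit Arguments. Unset Strict Implicit. Unset Printing Implicit Defensive.

Definition nb (x : nat) (s : seq nat) := [seq q.2 | q <- marked s & GG_near x q.1].

Lemma marked_cons x s : marked (x :: s) = (x, mex1 (nb x s)) :: marked s.
Proof. reflexivity. Qed.

Lemma head_filter_iota (P : pred nat) a k n :
  head 0 [seq m <- iota a k | P m] = n -> n != 0 -> 0 < a ->
  [/\ P n, a <= n & forall m, a <= m < n -> ~~ P m].
Proof.
elim: k a => [|k IH] a /=; first by move=> <-.
case: ifP => Pa /=.
- move=> <- _ a0; split => // m; lia.
- move=> h n0 a0; have [Pn an hm] := IH a.+1 h n0 (ltn0Sn _).
  split => //; first lia.
  move=> m /andP [am mn]; case: (eqVneq m a) => [->|ma]; first by rewrite Pa.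
  apply: hm; lia.
Qed.

Lemma mex1_ne0 L : mex1 L != 0.
Proof.
rewrite /mex1.
have : has (fun n => n \notin L) (iota 1 (size L).+1).
  apply/negPn/negP => /hasPn H.
  have : size (iota 1 (size L).+1) <= size L.
    apply: uniq_leq_size; first exact: iota_uniq.
    by move=> x /H; rewrite negbK.
  by rewrite size_iota ltnn.
rewrite has_filter.
case E: [seq n <- iota 1 (size L).+1 | n \notin L] => [|x s] //= _.
have : x \in [seq n <- iota 1 (size L).+1 | n \notin L] by rewrite E mem_head.
rewrite mem_filter mem_iota => /andP [_ /andP [h _]]; lia.
Qed.

Lemma mex1P L : [/\ 0 < mex1 L, mex1 L \notin L & forall n, 0 < n < mex1 L -> n \in L].
Proof.
have [h1 h2 h3] := head_filter_iota (erefl (mex1 L)) (mex1_ne0 L) (ltn0Sn 0).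
split => // n hn; apply/negPn; exact: h3.
Qed.

Lemma mex1_1 L : (mex1 L == 1) = (1 \notin L).
Proof.
have [h1 h2 h3] := mex1P L.
case: (eqVneq (mex1 L) 1) => [E|E]; first by rewrite -E h2.
by rewrite h3 //; lia.
Qed.

Lemma size_GG s : size (GG_marks s) = size s.
Proof. by elim: s => //= x s ->. Qed.

Lemma unzip1_marked s : unzip1 (marked s) = s.
Proof. by rewrite /marked unzip1_zip // size_GG. Qed.

Lemma marked_in s y m : (y, m) \in marked s -> y \in s.
Proof. move=> H; rewrite -(unzip1_marked s); apply/mapP; by exists (y,m). Qed.

Lemma marked_ex s y : y \in s -> exists m, (y,m) \in marked s.
Proof. rewrite -{1}(unzip1_marked s) => /mapP [[a b] H /= ->]; by exists b. Qed.

Lemma marked_split p x m : (x,m) \in marked p ->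
  exists s1 s2, p = s1 ++ x :: s2 /\ m = mex1 (nb x s2).
Proof.
elim: p => // z s IH; rewrite marked_cons in_cons => /orP [/eqP [-> ->]|H].
  by exists [::], s.
have [s1 [s2 [-> ->]]] := IH H; by exists (z :: s1), s2.
Qed.

Lemma marked_cat s1 s2 y m : (y,m) \in marked s2 -> (y,m) \in marked (s1 ++ s2).
Proof. elim: s1 => //= z s IH H; by rewrite marked_cons in_cons (IH H) orbT. Qed.

Lemma marked_suffix s1 s2 y m : (y,m) \in marked (s1 ++ s2) -> y \notin s1 ->
  (y,m) \in marked s2.
Proof.
elim: s1 => //= z s IH; rewrite marked_cons in_cons => /orP [/eqP [-> _]|H];
  rewrite in_cons; first by rewrite eqxx.
by case/norP => _; apply: IH.
Qed.

Lemma geq_tr : transitive geq.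
Proof. move=> a b c /= h1 h2; lia. Qed.

Lemma sorted_split s1 x s2 : sorted geq (s1 ++ x :: s2) ->
  [/\ (forall y, y \in s1 -> x <= y), (forall y, y \in s2 -> y <= x) & sorted geq s2].
Proof.
elim: s1 => [|z s IH] /=.
  move=> H; split => //; last exact: path_sorted H.
  by move=> y; move: (order_path_min geq_tr H) => /allP h /h.
move=> H; have [h1 h2 h3] := IH (path_sorted H).
split => // y; rewrite in_cons => /orP [/eqP ->|/h1 //].
move: (order_path_min geq_tr H) => /allP h; apply: (h x).
by rewrite mem_cat mem_head orbT.
Qed.

Lemma mem_nb x s y m : (y,m) \in marked s -> GG_near x y -> m \in nb x s.
Proof. move=> H1 H2; apply/mapP; exists (y,m) => //; by rewrite mem_filter H2. Qed.

Lemma nbP x s m : m \in nb x s -> exists y, (y,m) \in marked s /\ GG_near x y.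
Proof. by case/mapP => [[y m'] /=]; rewrite mem_filter /= => /andP [h1 h2] ->; exists y. Qed.

Lemma near_lift o y : odd o -> y <= o -> GG_near o y -> GG_near (o + 1) y.
Proof. rewrite /GG_near addn1 /= => -> /=; lia. Qed.

Lemma H_o s o mo m : sorted geq s -> odd o -> (o,mo) \in marked s ->
  0 < m < mo -> m \in nb (o + 1) s.
Proof.
move=> Hs Ho H; have [u1 [u2 [E Emo]]] := marked_split H.
move=> hm; have [_ _ h3] := mex1P (nb o u2).
rewrite -Emo in h3; have [y [Hy Hn]] := nbP (h3 _ hm).
rewrite E in Hs; have [_ hs2 _] := sorted_split Hs.
apply: (@mem_nb _ _ y); first by rewrite E; apply: marked_cat; rewrite marked_cons in_cons Hy orbT.
apply: near_lift => //; apply: hs2; exact: marked_in Hy.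
Qed.

Lemma near_o1 o : odd o -> GG_near (o + 1) o.
Proof. rewrite /GG_near addn1 /= => -> /=; lia. Qed.

Lemma o_after p o s1 s2 : sorted geq p -> o \in p -> p = s1 ++ (o + 1) :: s2 -> o \in s2.
Proof.
move=> Hs Hop E; rewrite E in Hs Hop; have [h1 _ _] := sorted_split Hs.
move: Hop; rewrite mem_cat in_cons => /orP [/h1|/orP [/eqP|//]]; lia.
Qed.

Lemma mark_pos s y m : (y,m) \in marked s -> 0 < m.
Proof. by move/marked_split=> [s1 [s2 [_ ->]]]; have [] := mex1P (nb y s2). Qed.

Lemma factA p o m : sorted geq p -> odd o -> o \in p ->
  (o + 1, m) \in marked p -> m != 1.
Proof.
move=> Hs Ho Hop /marked_split [s1 [s2 [E ->]]].
have Hos2 := o_after Hs Hop E.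
rewrite E in Hs; have [_ _ Hs2] := sorted_split Hs.
have [mo Hmo] := marked_ex Hos2.
rewrite mex1_1 negbK.
have Hin : mo \in nb (o + 1) s2 by apply: mem_nb Hmo (near_o1 Ho).
case: (eqVneq mo 1) => [e|ne]; first by rewrite e in Hin.
apply: (H_o Hs2 Ho Hmo); have := mark_pos Hmo; lia.
Qed.

Lemma factB p o : sorted geq p -> odd o -> o \in p ->
  (o + 1, 2) \in marked p -> (o, 1) \in marked p.
Proof.
move=> Hs Ho Hop H; have [s1 [s2 [E E2]]] := marked_split H.
have Hos2 := o_after Hs Hop E.
rewrite E in Hs; have [_ _ Hs2] := sorted_split Hs.
have [mo Hmo] := marked_ex Hos2.
have Hin : mo \in nb (o + 1) s2 by apply: mem_nb Hmo (near_o1 Ho).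
have [_ h2 _] := mex1P (nb (o + 1) s2); rewrite -E2 in h2.
have mp := mark_pos Hmo.
case: (eqVneq mo 1) => [e|ne]; first by rewrite E; apply: marked_cat; rewrite marked_cons in_cons -e Hmo orbT.
case: (eqVneq mo 2) => [e|ne2]; first by rewrite -e Hin in h2.
have := H_o Hs2 Ho Hmo (m := 2); rewrite (negbTE h2) => h; exfalso; apply: notF; apply: h; lia.
Qed.

Lemma last_occ (p : seq nat) z : z \in p -> exists s1 s2, p = s1 ++ z :: s2 /\ z \notin s2.
Proof.
elim: p => // w s IH; rewrite in_cons.
case Hs: (z \in s).
  move=> _; have [s1 [s2 [-> H]]] := IH Hs; by exists (w :: s1), s2.
rewrite orbF => /eqP Ez; subst z; exists [::], s; by rewrite Hs.
Qed.

Lemma factC p x : sorted geq p -> ~~ odd x -> x + 1 \notin p -> x + 2 \in p ->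
  (forall m, (x, m) \in marked p -> m != 1) -> (x + 2, 1) \in marked p.
Proof.
move=> Hs Ex Nx1 /last_occ [s1 [s2 [E N2]]] Hx.
have Em : mex1 (nb (x + 2) s2) = 1.
  apply/eqP; rewrite mex1_1; apply/negP => /nbP [y [Hy Hn]].
  have ys2 := marked_in Hy.
  have Hs' := Hs; rewrite E in Hs'; have [_ h2 _] := sorted_split Hs'.
  have yle := h2 _ ys2.
  have yne : y != x + 2 by apply: contraNneq N2 => <-.
  move: Hn; rewrite /GG_near oddD (negbTE Ex) /= => Hn.
  have : (y == x) || (y == x + 1) by lia.
  case/orP => /eqP Ey.
    have := Hx 1; rewrite -Ey E eqxx; move/(_ (marked_cat s1 _)); rewrite marked_cons in_cons Hy orbT.
    by move/(_ isT).
  by move: Nx1; rewrite -Ey E mem_cat in_cons ys2 !orbT.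
by rewrite E; apply: marked_cat; rewrite marked_cons Em mem_head.
Qed.

Lemma factD p a : (a, 2) \in marked p -> sorted geq p ->
  exists y, [/\ (y, 1) \in marked p, y <= a & GG_near a y].
Proof.
move=> H Hs; have [s1 [s2 [E E2]]] := marked_split H.
have : 1 \in nb a s2 by apply/negPn; rewrite -mex1_1 -E2.
case/nbP => y [Hy Hn]; exists y; split => //.
  by rewrite E; apply: marked_cat; rewrite marked_cons in_cons Hy orbT.
rewrite E in Hs; have [_ h _] := sorted_split Hs; apply: h; exact: marked_in Hy.
Qed.

Lemma marked_less p s1 x s2 y m : sorted geq p -> p = s1 ++ x :: s2 ->
  (y, m) \in marked p -> y < x -> (y, m) \in marked s2.
Proof.
move=> Hs E H yx; rewrite E in Hs H; have [h1 _ _] := sorted_split Hs.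
have : (y, m) \in marked (x :: s2).
  apply: (@marked_suffix s1 (x :: s2) y m H); apply/negP => /h1; lia.
rewrite marked_cons in_cons => /orP [/eqP [e _]|//]; lia.
Qed.

Lemma factE p o : sorted geq p -> odd o -> o \in p ->
  (forall x, x \in p -> odd x -> x <= o) ->
  (o + 3, 2) \in marked p ->
  (o + 3, 1) \in marked p /\ (forall m, (o + 5, m) \in marked p -> m != 1).
Proof.
move=> Hs Ho Hop Hodd H.
have [y [Hy yle Hn]] := factD H Hs.
move: Hn; rewrite /GG_near oddD Ho /= => Hn.
have yp := marked_in Hy.
have Ey : y = o + 3.
  case: (eqVneq y (o + 2)) => [e|ne].
    have := Hodd _ yp; rewrite e oddD Ho /=; move/(_ isT); lia.
  case: (eqVneq y (o + 1)) => [e|ne1].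
    by have := factA Hs Ho Hop (m := 1); rewrite -e Hy eqxx; move/(_ isT).
  lia.
rewrite Ey in Hy; split => // m /marked_split [s1 [s2 [E ->]]].
rewrite mex1_1 negbK; apply: (@mem_nb _ _ (o + 3)).
  apply: (marked_less Hs E Hy); lia.
by rewrite /GG_near oddD Ho /=; lia.
Qed.

Lemma size_parts p : size (parts_marked 2 p) = Nmark 2 p.
Proof. by rewrite /parts_marked size_map size_filter. Qed.

Lemma pim_marked p j : 1 <= j <= Nmark 2 p -> (pim 2 p j, 2) \in marked p.
Proof.
move=> /andP [j1 jN]; rewrite /pim /parts_marked.
have lt : j.-1 < size [seq q <- marked p | q.2 == 2] by rewrite size_filter; rewrite /Nmark in jN; lia.
rewrite (nth_map (0,0)) //.
have := mem_nth (0,0) lt; rewrite mem_filter => /andP [/eqP e].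
by case: (nth _ _ _) e => a b /= ->.
Qed.

Lemma pim_mono p i j : 1 <= i -> i <= j -> j <= Nmark 2 p -> sorted geq p ->
  pim 2 p j <= pim 2 p i.
Proof.
move=> i1 ij jN Hs.
have Ss : sorted geq (parts_marked 2 p).
  apply: (subseq_sorted geq_tr _ Hs).
  rewrite -{2}(unzip1_marked p) /parts_marked; apply: map_subseq; exact: filter_subseq.
have := sorted_leq_nth geq_tr (fun x => leqnn x) 0 Ss.
rewrite /pim => h; apply: h; rewrite ?inE /= ?size_parts; lia.
Qed.

Lemma ne_none4 {T} (A B C D : bool) (u1 u2 u3 u4 : T) : A || B || C || D ->
  isSome (if A then Some u1 else if B then Some u2 else if C then Some u3
   else if D then Some u4 else None).
Proof. by case: A; case: B; case: C; case: D. Qed.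

Lemma Dgood p o a : sorted geq p -> odd o -> o \in p ->
  (forall x, x \in p -> odd x -> x <= o) -> (a, 2) \in marked p -> o < a ->
  has_marked p 1 a || ((has_marked p 1 (a - 1) || has_marked p 1 (a - 2)) &&
                       ((a + 2 \in p) ==> has_marked p 1 (a + 2))).
Proof.
move=> Hs Ho Hop Hodd H oa.
have ap := marked_in H.
have Ea : ~~ odd a by apply/negP => /(Hodd _ ap); lia.
have [y [Hy yle Hn]] := factD H Hs.
move: Hn; rewrite /GG_near (negbTE Ea) => Hn.
case Ha: (has_marked p 1 a) => //=.
apply/andP; split.
  have : (y == a - 1) || (y == a - 2).
    case: (eqVneq y a) => [e|]; last lia.
    by move: Ha; rewrite /has_marked -e Hy.
  by case/orP => /eqP <-; rewrite /has_marked Hy ?orbT.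
apply/implyP => Ha2; apply: factC => //.
  apply/negP => Ha1; have := Hodd _ Ha1; rewrite oddD (negbTE Ea) /=; move/(_ isT); lia.
move=> m Hm; apply/negP => /eqP e; by move: Ha; rewrite /has_marked -e Hm.
Qed.

Lemma st_auxSS p b : st_aux p b.+2 =
  match st_aux p b.+1 with
  | None => None
  | Some (_, sg) =>
    let a := pim 2 p b.+2 in
    let h1 := has_marked p 1 in
    let c := h1 (a + 2) ==> (sg == a + 2) in
    if h1 (a - 1) && c then Some (s_0, a - 1)
    else if h1 (a - 2) && c then Some (s_1, a - 2)
    else if h1 (a + 2) && (sg != a + 2) then Some (s_2, a + 2)
    else if h1 a then Some (s_3, a)
    else None
  end.
Proof. reflexivity. Qed.

Lemma chain p o b : sorted geq p -> odd o -> o \in p ->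
  (forall x, x \in p -> odd x -> x <= o) ->
  1 <= b <= Nmark 2 p -> o < pim 2 p b -> isSome (st_aux p b).
Proof.
move=> Hs Ho Hop Hodd.
elim: b => [|[|b] IH] // Hb ob; last rewrite st_auxSS.
  rewrite /=.
  have := Dgood Hs Ho Hop Hodd (pim_marked Hb) ob.
  set a := pim 2 p 1 => D.
  apply: ne_none4; move: D.
  by case: (has_marked p 1 (a - 1)); case: (has_marked p 1 (a - 2));
     case: (has_marked p 1 (a + 2)); case: (has_marked p 1 a); case: (a + 2 \in p).
have Hb' : 1 <= b.+1 <= Nmark 2 p by lia.
have := IH Hb' (leq_trans ob (pim_mono (ltn0Sn _) (leqnSn _) (proj2 (andP Hb)) Hs)).
case: (st_aux p b.+1) => [[ty sg]|] // _ /=.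
have := Dgood Hs Ho Hop Hodd (pim_marked Hb) ob.
set a := pim 2 p b.+2 => D.
apply: ne_none4; move: D.
by case: (has_marked p 1 (a - 1)); case: (has_marked p 1 (a - 2));
   case: (has_marked p 1 (a + 2)); case: (has_marked p 1 a); case: (sg == a + 2).
Qed.
Lemma le_lval p o j : (forall x, x \in p -> odd x -> x <= o) ->
  1 <= j <= Nmark 2 p -> o < pim 2 p j -> j <= lval p.
Proof.
move=> Hodd /andP [j1 jN] oj.
have jlt : j < (Nmark 2 p).+1 by lia.
rewrite /lval.
apply: (@leq_bigmax_cond _ (fun i : 'I_(Nmark 2 p).+1 => no_odd_ge p i)
          (fun i => nat_of_ord i) (Ordinal jlt)).
rewrite /no_odd_ge /=; apply/orP; right; apply/allP => x xp.
case Ox: (odd x) => //=; have := Hodd _ xp Ox; lia.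
Qed.

Theorem corollary2p11 (k r t : nat) (p : seq nat) :
  3 <= r -> r <= k -> inC k r p ->
  (2 * t + 1) \in p -> (forall x, x \in p -> odd x -> x <= 2 * t + 1) ->
  (forall j, 1 <= j <= Nmark 2 p -> pim 2 p j = 2 * t + 2 ->
     start_type p j = Some s_0 \/ start_type p j = Some s_2) /\
  (forall j, 1 <= j <= Nmark 2 p -> pim 2 p j = 2 * t + 4 ->
     start_type p j = Some s_3).
Proof.
move=> r3 rk HC Hop Hodd.
have Hs : sorted geq p by case/and4P: HC => /andP [].
have Ho : odd (2 * t + 1) by rewrite oddD oddM.
move: Hop Hodd Ho; set o := 2 * t + 1 => Hop Hodd Ho.
split => j Hj Epim.
- have oj : o < pim 2 p j by rewrite Epim /o; lia.
  rewrite /start_type ltnNge (le_lval Hodd Hj oj) /=.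
  have H2 := pim_marked Hj; rewrite Epim in H2.
  have Eo1 : 2 * t + 2 = o + 1 by rewrite /o; lia.
  rewrite Eo1 in H2 Epim.
  have X : has_marked p 1 (o + 1 - 1) by rewrite addnK; exact: factB Hs Ho Hop H2.
  have C : (o + 1 + 2 \in p) -> has_marked p 1 (o + 1 + 2).
    move=> h; apply: factC => //.
      by rewrite oddD Ho.
      apply/negP => h1; have := Hodd _ h1; rewrite -addnA oddD Ho /=; move/(_ isT); lia.
    move=> m; exact: factA Hs Ho Hop.
  case: j Hj Epim oj => [|[|b]] Hj Epim oj //.
    rewrite /= Epim X /=.
    case Z: (o + 1 + 2 \in p) => /=; last by left.
    by rewrite andbF (C Z); right.
  rewrite st_auxSS.
  have ob : o < pim 2 p b.+1.
    apply: (leq_trans oj); apply: pim_mono => //; lia.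
  have Hb' : 1 <= b.+1 <= Nmark 2 p by lia.
  have := chain Hs Ho Hop Hodd Hb' ob.
  case: (st_aux p b.+1) => [[ty sg]|] // _ /=.
  rewrite Epim X /=.
  case Ch: (has_marked p 1 (o + 1 + 2)); case: (sg == o + 1 + 2); rewrite /= ?andbF; by auto.
- have oj : o < pim 2 p j by rewrite Epim /o; lia.
  rewrite /start_type ltnNge (le_lval Hodd Hj oj) /=.
  have H2 := pim_marked Hj; rewrite Epim in H2.
  have Eo3 : 2 * t + 4 = o + 3 by rewrite /o; lia.
  rewrite Eo3 in H2 Epim.
  have [D E5] := factE Hs Ho Hop Hodd H2.
  have X : has_marked p 1 (o + 3 - 1) = false.
    rewrite (_ : o + 3 - 1 = o + 2); last lia.
    apply/negP => /marked_in h; have := Hodd _ h; rewrite oddD Ho /=; move/(_ isT); lia.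
  have Y : has_marked p 1 (o + 3 - 2) = false.
    rewrite (_ : o + 3 - 2 = o + 1); last lia.
    by apply/negP => h; have := factA Hs Ho Hop h.
  have C : has_marked p 1 (o + 3 + 2) = false.
    rewrite (_ : o + 3 + 2 = o + 5); last lia.
    by apply/negP => h; have := E5 _ h.
  have D' : has_marked p 1 (o + 3) by [].
  case: j Hj Epim oj => [|[|b]] Hj Epim oj //.
    by rewrite /= Epim X Y C D'.
  rewrite st_auxSS.
  have ob : o < pim 2 p b.+1.
    apply: (leq_trans oj); apply: pim_mono => //; lia.
  have Hb' : 1 <= b.+1 <= Nmark 2 p by lia.
  have := chain Hs Ho Hop Hodd Hb' ob.
  case: (st_aux p b.+1) => [[ty sg]|] // _ /=.
  by rewrite Epim X Y C D' /= ?andbF.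
Qed.
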